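(* Let $\alpha\in C^\infty(\mathbb{R})$ satisfy $-1<\alpha<1$ and $\alpha(0)=0$, and set $\alpha^{(-1)}(t)=\int_0^t\alpha(s)\,ds$. Let $$p(x,\xi)=\sqrt{|\xi|^2+2\alpha(x_2)\xi_1\xi_3},\qquad x,\xi\in\mathbb{R}^3,$$ be the symbol of the cometric $\sum_{j,k} g^{jk}(x)d\xi_jd\xi_k=d\xi^2+2\alpha(x_2)\,d\xi_1d\xi_3$ on $T^*\mathbb{R}^3$, and let $\sum_{j,k} g_{jk}(x)dx_jdx_k$ be the corresponding Riemannian metric on $\mathbb{R}^3$, where $(g_{jk})=(g^{jk})^{-1}$. Then for each fixed $x_1\in\mathbb{R}$ and $-\pi/2<\theta<\pi/2$, the curve $$t\mapsto x(x_1,\theta;t)=\bigl(x_1+t\sin\theta,\ t\cos\theta,\ \sin\theta\,\alpha^{(-1)}(t\cos\theta)/\cos\theta\bigr)$$ is a geodesic for the metric $\sum g_{jk}dx_jdx_k$. Furthermore, the absolute value of the Jacobian determinant of the map $(x_1,\theta,t)\mapsto x(x_1,\theta;t)$ equals $|\alpha^{(-1)}(t)|$ when $\theta=0$. *)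

(* Defs.v *)
From Stdlib Require Import Reals.
From Coquelicot Require Import Coquelicot.
From mathcomp Require Import all_boot all_algebra.
From mathcomp Require Import Rstruct.

Set Implicit Arguments.
Unset Strict Implicit.
Unset Printing Implicit Defensive.

Import GRing.Theory Num.Theory.
Local Open Scope ring_scope.

(* Points of R^3 are functions 'I_3 -> R; indices 0,1,2 are the coordinates
   x_1, x_2, x_3 of the paper. *)
Definition pt := 'I_3 -> R.

Definition mkpt (a b c : R) : pt :=
  fun i => match nat_of_ord i with 0 => a | 1 => b | _ => c end.

Definition smooth (f : R -> R) : Prop :=
  forall (n : nat) (x : R), ex_derive_n f n x.

(* alpha^{(-1)}(t) = int_0^t alpha(s) ds  (oriented Riemann integral). *)
Definition alpha_prim (alpha : R -> R) (t : R) : R := RInt alpha 0 t.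

Definition Gup (alpha : R -> R) (x : pt) : 'M[R]_3 :=
  \matrix_(j < 3, k < 3)
    ((if j == k then 1 else 0) +
     (if ((nat_of_ord j == 0%N) && (nat_of_ord k == 2%N)) ||
         ((nat_of_ord j == 2%N) && (nat_of_ord k == 0%N))
      then alpha (x (inord 1)) else 0)).

Definition Glow (alpha : R -> R) (x : pt) : 'M[R]_3 := invmx (Gup alpha x).

Definition partial (f : pt -> R) (l : 'I_3) (x : pt) : R :=
  Derive (fun s => f (fun i => if i == l then x i + s else x i)) 0.

Definition christoffel (alpha : R -> R) (k i j : 'I_3) (x : pt) : R :=
  2^-1 * \sum_(l < 3)
      Gup alpha x k l *
      (partial (fun y => Glow alpha y j l) i x
       + partial (fun y => Glow alpha y i l) j x
       - partial (fun y => Glow alpha y i j) l x).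

Definition is_geodesic (alpha : R -> R) (c : R -> pt) : Prop :=
  forall (k : 'I_3) (t : R),
    ex_derive (fun s => c s k) t /\
    ex_derive (fun s => Derive (fun u => c u k) s) t /\
    Derive (fun s => Derive (fun u => c u k) s) t
     + \sum_(i < 3) \sum_(j < 3)
         christoffel alpha k i j (c t)
         * Derive (fun u => c u i) t * Derive (fun u => c u j) t = 0.

Definition curve (alpha : R -> R) (x1 theta t : R) : pt :=
  mkpt (x1 + t * sin theta)
       (t * cos theta)
       (sin theta * alpha_prim alpha (t * cos theta) / cos theta).

Definition curve_map (alpha : R -> R) (u : pt) : pt :=
  curve alpha (u (inord 0)) (u (inord 1)) (u (inord 2)).

Definition jacobian_det (F : pt -> pt) (u : pt) : R :=
  \det (\matrix_(i < 3, j < 3) partial (fun v => F v i) j u).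

(* Main.v *)
Require Import Defs.
From Stdlib Require Import Reals.
From Coquelicot Require Import Coquelicot.
From mathcomp Require Import all_boot all_algebra.
From mathcomp Require Import Rstruct.
From mathcomp Require Import ring lra.
Set Implicit Arguments. Unset Strict Implicit. Unset Printing Implicit Defensive.
Import GRing.Theory Num.Theory.
Local Open Scope ring_scope.

Lemma sum3 (F : 'I_3 -> R) : \sum_(i < 3) F i = F (@Ordinal 3 0 isT) + F (@Ordinal 3 1 isT) + F (@Ordinal 3 2 isT).
Proof. rewrite !big_ord_recr big_ord0 /= add0r. do 3 f_equal; exact: val_inj. Qed.

Notation O0 := (@Ordinal 3 0 isT). Notation O1 := (@Ordinal 3 1 isT). Notation O2 := (@Ordinal 3 2 isT).
Lemma io0 : (inord 0 : 'I_3) = @Ordinal 3 0 isT. Proof. by apply/val_inj; rewrite /= inordK. Qed.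
Lemma io1 : (inord 1 : 'I_3) = @Ordinal 3 1 isT. Proof. by apply/val_inj; rewrite /= inordK. Qed.
Lemma io2 : (inord 2 : 'I_3) = @Ordinal 3 2 isT. Proof. by apply/val_inj; rewrite /= inordK. Qed.

Definition E1 (j l : 'I_3) : R := if ((nat_of_ord j == 0%N) && (nat_of_ord l == 0%N)) || ((nat_of_ord j == 2%N) && (nat_of_ord l == 2%N)) then 1%R else 0%R.
Definition E2 (j l : 'I_3) : R := if ((nat_of_ord j == 0%N) && (nat_of_ord l == 2%N)) || ((nat_of_ord j == 2%N) && (nat_of_ord l == 0%N)) then 1%R else 0%R.
Definition E3 (j l : 'I_3) : R := if ((nat_of_ord j == 1%N) && (nat_of_ord l == 1%N)) then 1%R else 0%R.
Definition pf (a : R) : R := ((1 - a * a)^-1)%R.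
Definition qf (a : R) : R := (- a / (1 - a * a))%R.
Definition Hm (a : R) : 'M[R]_3 := \matrix_(j < 3, l < 3) (E1 j l * pf a + E2 j l * qf a + E3 j l)%R.

Definition Gm (a : R) : 'M[R]_3 := \matrix_(j < 3, k < 3)
    ((if j == k then 1 else 0) +
     (if ((nat_of_ord j == 0%N) && (nat_of_ord k == 2%N)) ||
         ((nat_of_ord j == 2%N) && (nat_of_ord k == 0%N))
      then a else 0))%R.

Lemma Gup_eq (alpha : R -> R) (x : pt) : Gup alpha x = Gm (alpha (x (inord 1))).
Proof. by apply/matrixP => i j; rewrite !mxE. Qed.

Lemma Glow_eq (alpha : R -> R) (x : pt) : (-1 < alpha (x (inord 1)) < 1) -> Glow alpha x = Hm (alpha (x (inord 1))).
Proof.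
rewrite /Glow Gup_eq.
move: (alpha _) => a /andP[h1 h2].
have ha : 1 - a * a != 0.
  have h3 : a * a < 1 by nra.
  by rewrite lt0r_neq0 // subr_gt0.
have M : Gm a *m Hm a = 1%:M.
{ apply/matrixP => i j; rewrite !mxE sum3 !mxE /E1 /E2 /E3 /pf /qf.
  case: i => [[|[|[|i]]] Hi] //; case: j => [[|[|[|j]]] Hj] //=.
  all: rewrite ?(mulr1, mul1r, mulr0, mul0r, addr0, add0r) //. all: by field. }
have [U _] := mulmx1_unit M.
by rewrite -[Hm a]mul1mx -(mulVmx U) -mulmxA M mulmx1.
Qed.
Lemma det3 (A : 'M[R]_3) : \det A = A O0 O0 * (A O1 O1 * A O2 O2 - A O1 O2 * A O2 O1) - A O0 O1 * (A O1 O0 * A O2 O2 - A O1 O2 * A O2 O0) + A O0 O2 * (A O1 O0 * A O2 O1 - A O1 O1 * A O2 O0).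
Proof.
have [f HA] : exists f : nat -> nat -> R, forall i j, A i j = f i j.
  by exists (fun a b => A (inord a) (inord b)) => i j; rewrite !inord_val.
rewrite (expand_det_row _ O0) sum3 /cofactor.
rewrite !(expand_det_row _ ord0) !big_ord_recr !big_ord0 /= /cofactor !det_mx11 !mxE !HA /=.
ring.
Qed.

Lemma partial_1 (f : R -> R) (l : 'I_3) (x : pt) (df : R) :
  is_derive f (x (inord 1)) df ->
  partial (fun y => f (y (inord 1))) l x = if l == inord 1 then df else 0.
Proof.
rewrite /partial => Hd; case: (boolP (l == inord 1)) => [/eqP ->|ne].
  rewrite eqxx; apply: is_derive_unique.
  have H1 : is_derive (fun s : R => Rplus (x (inord 1)) s) 0%R 1%R.
    by auto_derive.
  rewrite -(Rplus_0_r (x (inord 1))) in Hd.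
  have := is_derive_comp f _ _ _ _ Hd H1.
  by rewrite /scal /= /mult /= Rmult_1_l.
rewrite eq_sym (negbTE ne).
exact: Derive_const.
Qed.

Definition dpf (a : R) : R := ((a + a) / ((1 - a * a) * (1 - a * a)))%R.
Definition dqf (a : R) : R := (- (1 + a * a) / ((1 - a * a) * (1 - a * a)))%R.
Definition DH (a : R) (j l : 'I_3) : R := (E1 j l * dpf a + E2 j l * dqf a)%R.

Lemma dHm (alpha : R -> R) (b : R) (j l : 'I_3) :
  -1 < alpha b < 1 -> ex_derive alpha b ->
  is_derive (fun b => Hm (alpha b) j l) b (DH (alpha b) j l * Derive alpha b).
Proof.
move=> /andP[h1 h2] hd.
have ha : 1 - alpha b * alpha b != 0.
  have h3 : alpha b * alpha b < 1 by nra.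
  by rewrite lt0r_neq0 // subr_gt0.
apply: (is_derive_ext (fun b => Rplus (Rplus (Rmult (E1 j l) (Rinv (Rminus 1 (Rmult (alpha b) (alpha b)))))
   (Rmult (E2 j l) (Rdiv (Ropp (alpha b)) (Rminus 1 (Rmult (alpha b) (alpha b)))))) (E3 j l))).
  by move=> u; rewrite mxE.
auto_derive.
  have hb : Rplus 1 (Ropp (Rmult (alpha b) (alpha b))) <> 0 by move/eqP: ha.
  by intuition.
rewrite !RealsE /DH /dpf /dqf.
by field.
Qed.

Lemma dA (alpha : R -> R) (Hd : forall b, ex_derive alpha b) (b : R) :
  is_derive (alpha_prim alpha) b (alpha b).
Proof.
apply: is_derive_RInt; last exact: ex_derive_continuous.
apply: filter_forall => u; apply: RInt_correct; apply: ex_RInt_continuous => z _.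
exact: ex_derive_continuous.
Qed.

Definition Dg (a d : R) (i j l : 'I_3) : R := if nat_of_ord i == 1%N then (DH a j l * d)%R else 0%R.

Lemma partial_Glow (alpha : R -> R) (Hb : forall s, -1 < alpha s < 1)
  (Hd : forall s, ex_derive alpha s) (j l i : 'I_3) (x : pt) :
  partial (fun y => Glow alpha y j l) i x =
  Dg (alpha (x (inord 1))) (Derive alpha (x (inord 1))) i j l.
Proof.
have -> : (fun y => Glow alpha y j l) = (fun y => (fun b => Hm (alpha b) j l) (y (inord 1))).
  by apply: FunctionalExtensionality.functional_extensionality => y; rewrite Glow_eq.
rewrite (partial_1 i (dHm j l (Hb _) (Hd _))) /Dg io1.
by case: i => [[|[|[|i]]] Hi].
Qed.

Lemma christoffel_eq (alpha : R -> R) (Hb : forall s, -1 < alpha s < 1)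
  (Hd : forall s, ex_derive alpha s) (k i j : 'I_3) (x : pt) :
  christoffel alpha k i j x =
  2^-1 * \sum_(l < 3) Gm (alpha (x (inord 1))) k l *
     (Dg (alpha (x (inord 1))) (Derive alpha (x (inord 1))) i j l
      + Dg (alpha (x (inord 1))) (Derive alpha (x (inord 1))) j i l
      - Dg (alpha (x (inord 1))) (Derive alpha (x (inord 1))) l i j).
Proof.
rewrite /christoffel; congr (_ * _); apply: eq_bigr => l _.
by rewrite !partial_Glow // Gup_eq.
Qed.

Lemma geod (alpha : R -> R) (Hb : forall s, -1 < alpha s < 1)
  (Hd : forall s, ex_derive alpha s) (x1 th : R) (hc : cos th != 0) :
  is_geodesic alpha (fun t => curve alpha x1 th t).
Proof.
have hc' : cos th <> 0 by move/eqP: hc.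
have idc : forall (i : 'I_3) u, is_derive (fun u => curve alpha x1 th u i) u
    (mkpt (sin th) (cos th) (sin th * alpha (u * cos th)) i).
  move=> i u; case: i => [[|[|[|i]]] Hi] //; rewrite /curve /mkpt /=.
  - by auto_derive => //; rewrite !RealsE; ring.
  - by auto_derive => //; rewrite !RealsE; ring.
  - auto_derive; first by exists (alpha (u * cos th)); exact: dA.
    rewrite (is_derive_unique _ _ _ (dA Hd _)) !RealsE.
    by field.
have dc : forall (i : 'I_3) u, Derive (fun u => curve alpha x1 th u i) u =
    mkpt (sin th) (cos th) (sin th * alpha (u * cos th)) i.
  by move=> i u; apply: is_derive_unique; exact: idc.
have iddc : forall (i : 'I_3) (u : R), is_derive (fun u : R => mkpt (sin th) (cos th) (Rmult (sin th) (alpha (Rmult u (cos th)))) i) u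
    (mkpt 0 0 (sin th * (cos th * Derive alpha (u * cos th))) i).
  move=> i u; case: i => [[|[|[|i]]] Hi] //; rewrite /mkpt /=.
  - by auto_derive => //; rewrite !RealsE; ring.
  - by auto_derive => //; rewrite !RealsE; ring.
  - auto_derive; first exact: Hd.
    by rewrite !RealsE; ring.
move=> k t.
have ddc : (fun s => Derive (fun u => curve alpha x1 th u k) s) =
   (fun s => mkpt (sin th) (cos th) (sin th * alpha (s * cos th)) k).
  by apply: FunctionalExtensionality.functional_extensionality => s; exact: dc.
split; first by exists (mkpt (sin th) (cos th) (sin th * alpha (t * cos th)) k); exact: idc.
rewrite ddc; split; first by eexists; exact: iddc.
rewrite (is_derive_unique _ _ _ (iddc _ _)) sum3 !sum3 !dc !(christoffel_eq Hb Hd) !sum3.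
cbv beta.
have e : curve alpha x1 th t (inord 1) = t * cos th by rewrite /curve /mkpt inordK.
rewrite e.
have := Hb (t * cos th).
move: (alpha (t * cos th)) (Derive alpha (t * cos th)) => a d /andP[h1 h2].
have ha : 1 - a * a != 0.
  have h3 : a * a < 1 by nra.
  by rewrite lt0r_neq0 // subr_gt0.
clear ddc; rewrite /Dg /DH /E1 /E2 /E3 /dpf /dqf.
case: k => [[|[|[|k]]] Hk] //; rewrite !mxE /mkpt /= !RealsE.
all: by field.
Qed.

Lemma jac (alpha : R -> R) (Hd : forall s, ex_derive alpha s) (x1 t : R) :
  jacobian_det (curve_map alpha) (mkpt x1 0 t) = - alpha_prim alpha t.
Proof.
rewrite /jacobian_det det3 !mxE /partial /curve_map /curve /mkpt !io0 !io1 !io2 /=.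
rewrite sin_0 cos_0.
change (@Algebra.add _) with Rplus.
try change (@GRing.mul _) with Rmult.
try change (@Algebra.opp _) with Ropp.
try change (@GRing.inv _) with Rinv.
try change (@GRing.one _) with (IZR 1).
try change (@Algebra.zero _) with (IZR 0).
do 20 try match goal with
| |- context [Derive (alpha_prim alpha) ?y] => rewrite (is_derive_unique _ _ _ (dA Hd y))
| |- context [Derive (fun z => alpha_prim alpha z) ?y] => rewrite (is_derive_unique _ _ _ (dA Hd y))
| |- context [Derive ?f ?x] =>
  erewrite (@is_derive_unique f x);
  [ | solve [auto_derive; [repeat split; try (eexists; exact: (dA Hd)); rewrite ?Rplus_0_r ?cos_0; exact: R1_neq_R0 | reflexivity]
            | auto_derive; reflexivity ] ] end.
rewrite !Rplus_0_r sin_0 cos_0 !Rmult_1_r !RealsE.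
by field.
Qed.

Theorem lemma2p1 (alpha : R -> R)
  (Hsmooth : smooth alpha)
  (Hbound : forall s : R, Rlt (-1) (alpha s) /\ Rlt (alpha s) 1)
  (H0 : alpha R0 = R0) :
  (forall x1 theta : R,
     Rlt (Ropp (Rdiv PI 2)) theta -> Rlt theta (Rdiv PI 2) ->
     is_geodesic alpha (fun t => curve alpha x1 theta t)) /\
  (forall x1 t : R,
     Rabs (jacobian_det (curve_map alpha) (mkpt x1 R0 t))
     = Rabs (alpha_prim alpha t)).
Proof.
have Hd : forall s, ex_derive alpha s := fun s => Hsmooth 1%N s.
have Hb : forall s, (-1 < alpha s < 1)%R.
  by move=> s; case: (Hbound s) => /RltP h1 /RltP h2; apply/andP; split.
split.
  move=> x1 th h1 h2; apply: geod => //.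
  have /RltP hc := cos_gt_0 th h1 h2.
  by rewrite lt0r_neq0.
by move=> x1 t; rewrite jac // Rabs_Ropp.
Qed.
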